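(* For any multi-index $I\in\mathbb{N}^6$, any smooth $\mathbb{R}$-valued function $f_1$ and any smooth $\mathbb{C}^2$-valued function $f_2$ on $\mathbb{R}^{1+2}$, we have $$\big|\big[\widehat\Gamma^I(f_1f_2)\big]_-\big|\lesssim\sum_{|I_1|+|I_2|\le|I|}\big|\Gamma^{I_1}f_1\big|\,\big|\big[\widehat\Gamma^{I_2}f_2\big]_-\big|.$$
   Context: On $\mathbb{R}^{1+2}$ with coordinates $(t,x)=(x_0,x_1,x_2)$, $r=|x|$, $\omega_a=x_a/r$ ($a=1,2$). Vector fields: $\Omega=x_1\partial_2-x_2\partial_1$, $L_a=t\partial_a+x_a\partial_t$; modified fields $\widehat\Omega=\Omega-\tfrac12\gamma^1\gamma^2$, $\widehat L_a=L_a-\tfrac12\gamma^0\gamma^a$. Set $(\Gamma_1,\dots,\Gamma_6)=(\partial_t,\partial_1,\partial_2,\Omega,L_1,L_2)$, $(\widehat\Gamma_1,\dots,\widehat\Gamma_6)=(\partial_t,\partial_1,\partial_2,\widehat\Omega,\widehat L_1,\widehat L_2)$, and for $I=(i_1,\dots,i_6)\in\mathbb{N}^6$, $\Gamma^I=\prod_{k=1}^6\Gamma_k^{i_k}$, $\widehat\Gamma^I=\prod_{k=1}^6\widehat\Gamma_k^{i_k}$, $|I|=\sum i_k$. For $\phi:\mathbb{R}^{1+2}\to\mathbb{C}^2$, $[\phi]_-=\phi-\omega_a\gamma^0\gamma^a\phi$ (summation over $a=1,2$). Dirac matrices: $\gamma^0=\begin{pmatrix}1&0\\0&-1\end{pmatrix}$,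 $\gamma^1=\begin{pmatrix}0&1\\-1&0\end{pmatrix}$, $\gamma^2=\begin{pmatrix}0&-i\\-i&0\end{pmatrix}$. The implicit constant depends only on $|I|$. *)

(* Defs.v *)
From Stdlib Require Import Reals List.
From Coquelicot Require Import Coquelicot.
Import ListNotations.
Open Scope R_scope.

Definition fn := R -> R -> R -> R.
Definition spinor := (C * C)%type.
Definition sf := R -> R -> R -> spinor.

Inductive dir := Dt | D1 | D2.

Definition line (d : dir) (g : fn) (t x1 x2 : R) : R -> R :=
  match d with
  | Dt => fun s => g s x1 x2
  | D1 => fun s => g t s x2
  | D2 => fun s => g t x1 s
  end.

Definition base (d : dir) (t x1 x2 : R) : R :=
  match d with Dt => t | D1 => x1 | D2 => x2 end.

Definition pd (d : dir) (g : fn) : fn :=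
  fun t x1 x2 => Derive (line d g t x1 x2) (base d t x1 x2).

Fixpoint pdl (l : list dir) (g : fn) : fn :=
  match l with
  | [] => g
  | d :: l' => pd d (pdl l' g)
  end.

Definition smooth (g : fn) : Prop :=
  forall l : list dir,
    (forall t x1 x2,
       continuous (fun p : R * R * R => let '(a, b, c) := p in pdl l g a b c)
                  (t, x1, x2)) /\
    (forall d t x1 x2, ex_derive (line d (pdl l g) t x1 x2) (base d t x1 x2)).

Definition comp1r (F : sf) : fn := fun t x1 x2 => fst (fst (F t x1 x2)).
Definition comp1i (F : sf) : fn := fun t x1 x2 => snd (fst (F t x1 x2)).
Definition comp2r (F : sf) : fn := fun t x1 x2 => fst (snd (F t x1 x2)).
Definition comp2i (F : sf) : fn := fun t x1 x2 => snd (snd (F t x1 x2)).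

Definition smoothS (F : sf) : Prop :=
  smooth (comp1r F) /\ smooth (comp1i F) /\ smooth (comp2r F) /\ smooth (comp2i F).

(* the vector fields Gamma_1..Gamma_6 = d_t, d_1, d_2, Omega, L_1, L_2 *)
Inductive vf := Vt | V1 | V2 | VOm | VL1 | VL2.

Definition Gam (k : vf) (g : fn) : fn :=
  match k with
  | Vt => pd Dt g
  | V1 => pd D1 g
  | V2 => pd D2 g
  | VOm => fun t x1 x2 => x1 * pd D2 g t x1 x2 - x2 * pd D1 g t x1 x2
  | VL1 => fun t x1 x2 => t * pd D1 g t x1 x2 + x1 * pd Dt g t x1 x2
  | VL2 => fun t x1 x2 => t * pd D2 g t x1 x2 + x2 * pd Dt g t x1 x2
  end.

Definition liftS (X : fn -> fn) (F : sf) : sf :=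
  fun t x1 x2 =>
    ((X (comp1r F) t x1 x2, X (comp1i F) t x1 x2),
     (X (comp2r F) t x1 x2, X (comp2i F) t x1 x2)).

Definition spadd (u v : spinor) : spinor :=
  (Cplus (fst u) (fst v), Cplus (snd u) (snd v)).
Definition spscale (z : C) (u : spinor) : spinor :=
  (Cmult z (fst u), Cmult z (snd u)).
Definition spsub (u v : spinor) : spinor := spadd u (spscale (RtoC (-1)) v).
Definition spnorm (u : spinor) : R :=
  sqrt (Cmod (fst u) ^ 2 + Cmod (snd u) ^ 2).

(* Dirac matrices: gamma0 = [[1,0],[0,-1]], gamma1 = [[0,1],[-1,0]],
   gamma2 = [[0,-i],[-i,0]] acting on column vectors (a,b). *)
Definition gamma0 (u : spinor) : spinor := (fst u, Copp (snd u)).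
Definition gamma1 (u : spinor) : spinor := (snd u, Copp (fst u)).
Definition gamma2 (u : spinor) : spinor :=
  (Cmult (Copp Ci) (snd u), Cmult (Copp Ci) (fst u)).

Definition GamH (k : vf) (F : sf) : sf :=
  match k with
  | VOm => fun t x1 x2 =>
      spsub (liftS (Gam VOm) F t x1 x2)
            (spscale (RtoC (1/2)) (gamma1 (gamma2 (F t x1 x2))))
  | VL1 => fun t x1 x2 =>
      spsub (liftS (Gam VL1) F t x1 x2)
            (spscale (RtoC (1/2)) (gamma0 (gamma1 (F t x1 x2))))
  | VL2 => fun t x1 x2 =>
      spsub (liftS (Gam VL2) F t x1 x2)
            (spscale (RtoC (1/2)) (gamma0 (gamma2 (F t x1 x2))))
  | _ => liftS (Gam k) F
  end.

Definition mi := (nat * nat * nat * nat * nat * nat)%type.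

Definition mi_size (I : mi) : nat :=
  let '(i1, i2, i3, i4, i5, i6) := I in (i1 + i2 + i3 + i4 + i5 + i6)%nat.

Definition GammaI (I : mi) (g : fn) : fn :=
  let '(i1, i2, i3, i4, i5, i6) := I in
  Nat.iter i1 (Gam Vt) (Nat.iter i2 (Gam V1) (Nat.iter i3 (Gam V2)
   (Nat.iter i4 (Gam VOm) (Nat.iter i5 (Gam VL1) (Nat.iter i6 (Gam VL2) g))))).

Definition GammaHI (I : mi) (F : sf) : sf :=
  let '(i1, i2, i3, i4, i5, i6) := I in
  Nat.iter i1 (GamH Vt) (Nat.iter i2 (GamH V1) (Nat.iter i3 (GamH V2)
   (Nat.iter i4 (GamH VOm) (Nat.iter i5 (GamH VL1) (Nat.iter i6 (GamH VL2) F))))).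

Definition mulRS (f1 : fn) (F : sf) : sf :=
  fun t x1 x2 => spscale (RtoC (f1 t x1 x2)) (F t x1 x2).

(* [phi]_- = phi - omega_a gamma^0 gamma^a phi at the point x = (x1,x2), x <> 0 *)
Definition minusP (x1 x2 : R) (u : spinor) : spinor :=
  let r := sqrt (x1 ^ 2 + x2 ^ 2) in
  spsub (spsub u (spscale (RtoC (x1 / r)) (gamma0 (gamma1 u))))
        (spscale (RtoC (x2 / r)) (gamma0 (gamma2 u))).

Definition mis_upto (n : nat) : list mi :=
  let s := seq 0 (S n) in
  filter (fun I => Nat.leb (mi_size I) n)
   (flat_map (fun a => flat_map (fun b => flat_map (fun c =>
     flat_map (fun d => flat_map (fun e => map (fun f => (a, b, c, d, e, f)) s)
     s) s) s) s) s).

Definition pairs_upto (n : nat) : list (mi * mi) :=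
  filter (fun p => Nat.leb (mi_size (fst p) + mi_size (snd p)) n)
         (list_prod (mis_upto n) (mis_upto n)).

Definition sumR (l : list R) : R := fold_right Rplus 0 l.

(* Main.v *)
Require Import Defs.
From Stdlib Require Import Reals List Lia Lra FunctionalExtensionality.
From Coquelicot Require Import Coquelicot.
Import ListNotations.
Open Scope R_scope.

Definition exd (g : fn) : Prop :=
  forall d t x1 x2, ex_derive (line d g t x1 x2) (base d t x1 x2).

Lemma line_base d g t x1 x2 : line d g t x1 x2 (base d t x1 x2) = g t x1 x2.
Proof. destruct d; reflexivity. Qed.

Lemma pd_plus f g d t x1 x2 : exd f -> exd g ->
  pd d (fun t x1 x2 => f t x1 x2 + g t x1 x2) t x1 x2 = pd d f t x1 x2 + pd d g t x1 x2.
Proof.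
  intros Hf Hg. unfold pd.
  replace (line d (fun t x1 x2 => f t x1 x2 + g t x1 x2) t x1 x2)
    with (fun s => line d f t x1 x2 s + line d g t x1 x2 s) by (destruct d; reflexivity).
  apply Derive_plus; auto.
Qed.

Lemma pd_mult f g d t x1 x2 : exd f -> exd g ->
  pd d (fun t x1 x2 => f t x1 x2 * g t x1 x2) t x1 x2
  = pd d f t x1 x2 * g t x1 x2 + f t x1 x2 * pd d g t x1 x2.
Proof.
  intros Hf Hg. unfold pd.
  replace (line d (fun t x1 x2 => f t x1 x2 * g t x1 x2) t x1 x2)
    with (fun s => line d f t x1 x2 s * line d g t x1 x2 s) by (destruct d; reflexivity).
  rewrite Derive_mult by auto. rewrite !line_base. reflexivity.
Qed.

Lemma pd_const c d t x1 x2 : pd d (fun _ _ _ => c) t x1 x2 = 0.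
Proof. unfold pd. destruct d; cbn [line base]; apply Derive_const. Qed.

Lemma exd_plus f g : exd f -> exd g -> exd (fun t x1 x2 => f t x1 x2 + g t x1 x2).
Proof.
  intros Hf Hg d t x1 x2.
  replace (line d (fun t x1 x2 => f t x1 x2 + g t x1 x2) t x1 x2)
    with (fun s => line d f t x1 x2 s + line d g t x1 x2 s) by (destruct d; reflexivity).
  exact (ex_derive_plus (line d f t x1 x2) (line d g t x1 x2) _ (Hf _ _ _ _) (Hg _ _ _ _)).
Qed.

Lemma exd_mult f g : exd f -> exd g -> exd (fun t x1 x2 => f t x1 x2 * g t x1 x2).
Proof.
  intros Hf Hg d t x1 x2.
  replace (line d (fun t x1 x2 => f t x1 x2 * g t x1 x2) t x1 x2)
    with (fun s => line d f t x1 x2 s * line d g t x1 x2 s) by (destruct d; reflexivity).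
  apply ex_derive_mult; auto.
Qed.

Lemma exd_const c : exd (fun _ _ _ => c).
Proof. intros d t x1 x2; destruct d; apply ex_derive_const. Qed.

Fixpoint goodn (n : nat) (g : fn) : Prop :=
  match n with O => True | S m => exd g /\ forall d, goodn m (pd d g) end.
Definition good (g : fn) := forall n, goodn n g.

Lemma goodn_S n g : goodn (S n) g -> goodn n g.
Proof.
  revert g; induction n; intros g H; simpl in *; [auto|].
  destruct H as [H1 H2]. split; [auto|]. intros d; apply IHn; apply H2.
Qed.

Lemma good_exd g : good g -> exd g.
Proof. intros H; exact (proj1 (H 1%nat)). Qed.

Lemma good_ext f g : (forall t x1 x2, f t x1 x2 = g t x1 x2) -> good f -> good g.
Proof.
  intros H. assert (f = g) by (do 3 (apply functional_extensionality; intro); auto).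
  subst; auto.
Qed.

Lemma goodn_const n : forall c, goodn n (fun _ _ _ => c).
Proof.
  induction n; intros c; simpl; auto. split; [apply exd_const|].
  intros d. replace (pd d (fun _ _ _ => c)) with (fun _ _ _ : R => 0); [apply IHn|].
  do 3 (apply functional_extensionality; intro). rewrite pd_const; auto.
Qed.

Lemma good_const c : good (fun _ _ _ => c).
Proof. intro n; apply goodn_const. Qed.

Lemma goodn_plus n : forall f g, goodn n f -> goodn n g ->
  goodn n (fun t x1 x2 => f t x1 x2 + g t x1 x2).
Proof.
  induction n; intros f g Hf Hg; simpl in *; auto.
  destruct Hf as [Hf1 Hf2], Hg as [Hg1 Hg2]. split; [apply exd_plus; auto|].
  intros d.
  replace (pd d (fun t x1 x2 => f t x1 x2 + g t x1 x2))
    with (fun t x1 x2 => pd d f t x1 x2 + pd d g t x1 x2).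
  - apply IHn; auto.
  - do 3 (apply functional_extensionality; intro). rewrite pd_plus; auto.
Qed.

Lemma good_plus f g : good f -> good g -> good (fun t x1 x2 => f t x1 x2 + g t x1 x2).
Proof. intros Hf Hg n; apply goodn_plus; auto. Qed.

Lemma goodn_mult n : forall f g, goodn n f -> goodn n g ->
  goodn n (fun t x1 x2 => f t x1 x2 * g t x1 x2).
Proof.
  induction n; intros f g Hf Hg; simpl in *; auto.
  pose proof (goodn_S n f Hf) as Hf'. pose proof (goodn_S n g Hg) as Hg'.
  destruct Hf as [Hf1 Hf2], Hg as [Hg1 Hg2]. split; [apply exd_mult; auto|].
  intros d.
  replace (pd d (fun t x1 x2 => f t x1 x2 * g t x1 x2))
    with (fun t x1 x2 => pd d f t x1 x2 * g t x1 x2 + f t x1 x2 * pd d g t x1 x2).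
  - apply goodn_plus; apply IHn; auto.
  - do 3 (apply functional_extensionality; intro). rewrite pd_mult; auto.
Qed.

Lemma good_mult f g : good f -> good g -> good (fun t x1 x2 => f t x1 x2 * g t x1 x2).
Proof. intros Hf Hg n; apply goodn_mult; auto. Qed.

Lemma good_opp f : good f -> good (fun t x1 x2 => - f t x1 x2).
Proof.
  intros H. apply good_ext with (f := fun t x1 x2 => (fun _ _ _ => -1) t x1 x2 * f t x1 x2).
  - intros; simpl; ring.
  - apply good_mult; auto using good_const.
Qed.

Lemma good_minus f g : good f -> good g -> good (fun t x1 x2 => f t x1 x2 - g t x1 x2).
Proof.
  intros Hf Hg. apply good_ext with (f := fun t x1 x2 => f t x1 x2 + (fun t x1 x2 => - g t x1 x2) t x1 x2).
  - intros; simpl; ring.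
  - apply good_plus; auto using good_opp.
Qed.

Lemma good_pd d g : good g -> good (pd d g).
Proof. intros H n. exact (proj2 (H (S n)) d). Qed.

Lemma good_coord_gen (h : R -> R -> R -> R) (c : dir -> R) :
  (forall d t x1 x2, ex_derive (line d h t x1 x2) (base d t x1 x2)) ->
  (forall d t x1 x2, pd d h t x1 x2 = c d) -> good h.
Proof.
  intros H1 H2 n. destruct n; simpl; auto. split; auto.
  intros d. replace (pd d h) with (fun _ _ _ : R => c d); [apply goodn_const|].
  do 3 (apply functional_extensionality; intro). auto.
Qed.

Lemma e_id t : @ex_derive R_AbsRing R_NormedModule (fun s : R => s) t.
Proof. exact (ex_derive_id (K:=R_AbsRing) t). Qed.
Lemma e_const t x : @ex_derive R_AbsRing R_NormedModule (fun _ : R => t) x.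
Proof. exact (ex_derive_const (K:=R_AbsRing) (V:=R_NormedModule) t x). Qed.
Lemma D_id x : Derive (fun s : R => s) x = 1.
Proof. exact (Derive_id x). Qed.

Lemma good_t : good (fun t _ _ => t).
Proof.
  apply good_coord_gen with (c := fun d => match d with Dt => 1 | _ => 0 end).
  - intros d; destruct d; intros; cbn [line base]; first [apply e_id | apply e_const].
  - intros d; destruct d; intros; unfold pd; cbn [line base];
    first [apply Derive_const | apply D_id].
Qed.
Lemma good_x1 : good (fun _ x1 _ => x1).
Proof.
  apply good_coord_gen with (c := fun d => match d with D1 => 1 | _ => 0 end).
  - intros d; destruct d; intros; cbn [line base]; first [apply e_id | apply e_const].
  - intros d; destruct d; intros; unfold pd; cbn [line base];
    first [apply Derive_const | apply D_id].
Qed.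
Lemma good_x2 : good (fun _ _ x2 => x2).
Proof.
  apply good_coord_gen with (c := fun d => match d with D2 => 1 | _ => 0 end).
  - intros d; destruct d; intros; cbn [line base]; first [apply e_id | apply e_const].
  - intros d; destruct d; intros; unfold pd; cbn [line base];
    first [apply Derive_const | apply D_id].
Qed.

Lemma smooth_good f : smooth f -> good f.
Proof.
  intros H. cut (forall n l, goodn n (pdl l f)). { intros G n; exact (G n []). }
  induction n; intros l; simpl; auto. split.
  - exact (proj2 (H l)).
  - intros d. exact (IHn (d :: l)).
Qed.

Ltac goodtac :=
  match goal with
  | |- good (fun _ _ _ => ?c) => apply good_const
  | |- good (fun t x1 x2 => @?A t x1 x2 + @?B t x1 x2) =>
      apply (good_plus A B); goodtac
  | |- good (fun t x1 x2 => @?A t x1 x2 - @?B t x1 x2) =>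
      apply (good_minus A B); goodtac
  | |- good (fun t x1 x2 => @?A t x1 x2 * @?B t x1 x2) =>
      apply (good_mult A B); goodtac
  | |- good (fun t x1 x2 => - @?A t x1 x2) =>
      apply (good_opp A); goodtac
  | |- _ => first [ exact good_t | exact good_x1 | exact good_x2 | assumption
                  | apply good_pd; goodtac | idtac ]
  end.

Lemma good_Gam k g : good g -> good (Gam k g).
Proof. intros H; destruct k; unfold Gam; goodtac. Qed.

Ltac goodtac2 :=
  match goal with
  | |- good (fun _ _ _ => ?c) => apply good_const
  | |- good (fun t x1 x2 => @?A t x1 x2 + @?B t x1 x2) =>
      apply (good_plus A B); goodtac2
  | |- good (fun t x1 x2 => @?A t x1 x2 - @?B t x1 x2) =>
      apply (good_minus A B); goodtac2
  | |- good (fun t x1 x2 => @?A t x1 x2 * @?B t x1 x2) =>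
      apply (good_mult A B); goodtac2
  | |- good (fun t x1 x2 => - @?A t x1 x2) =>
      apply (good_opp A); goodtac2
  | |- _ => first [ exact good_t | exact good_x1 | exact good_x2 | assumption
                  | apply good_pd; goodtac2 | apply good_Gam; goodtac2 | idtac ]
  end.

Definition sfadd (F G : sf) : sf := fun t x1 x2 => spadd (F t x1 x2) (G t x1 x2).
Definition szero : spinor := ((0,0),(0,0)).
Definition sfzero : sf := fun _ _ _ => szero.
Definition goodS (F : sf) := good (comp1r F) /\ good (comp1i F) /\ good (comp2r F) /\ good (comp2i F).

Ltac splitpair := repeat match goal with |- (_, _) = (_, _) => f_equal end.
Ltac spin := cbv [spsub spadd spscale gamma0 gamma1 gamma2 RtoC Cplus Cmult Copp Ci
  comp1r comp1i comp2r comp2i szero sfadd sfzero mulRS fst snd];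
  splitpair; ring.

Ltac fext := do 3 (apply functional_extensionality; intro).

Lemma Gam_plus k f g t x1 x2 : exd f -> exd g ->
  Gam k (fun t x1 x2 => f t x1 x2 + g t x1 x2) t x1 x2 = Gam k f t x1 x2 + Gam k g t x1 x2.
Proof. intros Hf Hg; destruct k; unfold Gam; rewrite ?(pd_plus f g) by auto; ring. Qed.

Lemma Gam_mult k f g t x1 x2 : exd f -> exd g ->
  Gam k (fun t x1 x2 => f t x1 x2 * g t x1 x2) t x1 x2
  = Gam k f t x1 x2 * g t x1 x2 + f t x1 x2 * Gam k g t x1 x2.
Proof. intros Hf Hg; destruct k; unfold Gam; rewrite ?(pd_mult f g) by auto; ring. Qed.

Lemma Gam_const k c t x1 x2 : Gam k (fun _ _ _ => c) t x1 x2 = 0.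
Proof. destruct k; unfold Gam; rewrite ?pd_const; ring. Qed.

Lemma c1r_add F G : comp1r (sfadd F G) = fun t x1 x2 => comp1r F t x1 x2 + comp1r G t x1 x2.
Proof. reflexivity. Qed.
Lemma c1i_add F G : comp1i (sfadd F G) = fun t x1 x2 => comp1i F t x1 x2 + comp1i G t x1 x2.
Proof. reflexivity. Qed.
Lemma c2r_add F G : comp2r (sfadd F G) = fun t x1 x2 => comp2r F t x1 x2 + comp2r G t x1 x2.
Proof. reflexivity. Qed.
Lemma c2i_add F G : comp2i (sfadd F G) = fun t x1 x2 => comp2i F t x1 x2 + comp2i G t x1 x2.
Proof. reflexivity. Qed.

Lemma c1r_mul f F : comp1r (mulRS f F) = fun t x1 x2 => f t x1 x2 * comp1r F t x1 x2.
Proof. fext. unfold mulRS. spin. Qed.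
Lemma c1i_mul f F : comp1i (mulRS f F) = fun t x1 x2 => f t x1 x2 * comp1i F t x1 x2.
Proof. fext. unfold mulRS. spin. Qed.
Lemma c2r_mul f F : comp2r (mulRS f F) = fun t x1 x2 => f t x1 x2 * comp2r F t x1 x2.
Proof. fext. unfold mulRS. spin. Qed.
Lemma c2i_mul f F : comp2i (mulRS f F) = fun t x1 x2 => f t x1 x2 * comp2i F t x1 x2.
Proof. fext. unfold mulRS. spin. Qed.

Lemma c1r_zero : comp1r sfzero = fun _ _ _ => 0. Proof. reflexivity. Qed.
Lemma c1i_zero : comp1i sfzero = fun _ _ _ => 0. Proof. reflexivity. Qed.
Lemma c2r_zero : comp2r sfzero = fun _ _ _ => 0. Proof. reflexivity. Qed.
Lemma c2i_zero : comp2i sfzero = fun _ _ _ => 0. Proof. reflexivity. Qed.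

Lemma goodS_exd F : goodS F ->
  exd (comp1r F) /\ exd (comp1i F) /\ exd (comp2r F) /\ exd (comp2i F).
Proof. intros (A&B&C&D); repeat split; apply good_exd; auto. Qed.

Lemma GamH_add k F G : goodS F -> goodS G ->
  GamH k (sfadd F G) = sfadd (GamH k F) (GamH k G).
Proof.
  intros HF HG. apply goodS_exd in HF as (A1&A2&A3&A4).
  apply goodS_exd in HG as (B1&B2&B3&B4). fext.
  destruct k; cbn [GamH]; unfold liftS; cbv beta;
  rewrite c1r_add, c1i_add, c2r_add, c2i_add;
  rewrite (Gam_plus _ (comp1r F) (comp1r G)), (Gam_plus _ (comp1i F) (comp1i G)),
    (Gam_plus _ (comp2r F) (comp2r G)), (Gam_plus _ (comp2i F) (comp2i G)) by auto;
  unfold sfadd; cbn [GamH]; unfold liftS; cbv beta; spin.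
Qed.

Lemma GamH_mul k f F : good f -> goodS F ->
  GamH k (mulRS f F) = sfadd (mulRS (Gam k f) F) (mulRS f (GamH k F)).
Proof.
  intros Hf HF. apply good_exd in Hf. apply goodS_exd in HF as (A1&A2&A3&A4). fext.
  destruct k; cbn [GamH]; unfold liftS; cbv beta;
  rewrite c1r_mul, c1i_mul, c2r_mul, c2i_mul;
  rewrite (Gam_mult _ f (comp1r F)), (Gam_mult _ f (comp1i F)),
    (Gam_mult _ f (comp2r F)), (Gam_mult _ f (comp2i F)) by auto;
  unfold sfadd, mulRS; cbn [GamH]; unfold liftS; cbv beta; spin.
Qed.

Lemma GamH_zero k : GamH k sfzero = sfzero.
Proof.
  fext. destruct k; cbn [GamH]; unfold liftS; cbv beta;
  rewrite c1r_zero, c1i_zero, c2r_zero, c2i_zero, !Gam_const;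
  unfold sfzero; spin.
Qed.

Lemma goodS_add F G : goodS F -> goodS G -> goodS (sfadd F G).
Proof.
  intros (A1&A2&A3&A4) (B1&B2&B3&B4). unfold goodS.
  rewrite c1r_add, c1i_add, c2r_add, c2i_add. repeat split; apply good_plus; auto.
Qed.

Lemma goodS_mul f F : good f -> goodS F -> goodS (mulRS f F).
Proof.
  intros Hf (A1&A2&A3&A4). unfold goodS.
  rewrite c1r_mul, c1i_mul, c2r_mul, c2i_mul. repeat split; apply good_mult; auto.
Qed.

Lemma goodS_zero : goodS sfzero.
Proof. unfold goodS. rewrite c1r_zero, c1i_zero, c2r_zero, c2i_zero. repeat split; apply good_const. Qed.

Lemma goodS_GamH k F : goodS F -> goodS (GamH k F).
Proof.
  intros (A1&A2&A3&A4).
  destruct k; unfold goodS; cbn [GamH]; unfold liftS; cbv beta;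
  unfold spsub, spadd, spscale, gamma0, gamma1, gamma2, RtoC, Cplus, Cmult, Copp, Ci;
  unfold comp1r, comp1i, comp2r, comp2i in *; cbn [fst snd];
  repeat split; goodtac2.
Qed.

Fixpoint sfsum (l : list sf) : sf :=
  match l with [] => sfzero | F :: l' => sfadd F (sfsum l') end.
Fixpoint GL (ks : list vf) (f : fn) : fn :=
  match ks with [] => f | k :: ks' => Gam k (GL ks' f) end.
Fixpoint GHL (ks : list vf) (F : sf) : sf :=
  match ks with [] => F | k :: ks' => GamH k (GHL ks' F) end.
Fixpoint splits (l : list vf) : list (list vf * list vf) :=
  match l with
  | [] => [([], [])]
  | k :: l' => map (fun p => (k :: fst p, snd p)) (splits l')
               ++ map (fun p => (fst p, k :: snd p)) (splits l')
  end.

Lemma good_GL ks f : good f -> good (GL ks f).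
Proof. intros H; induction ks; simpl; auto. apply good_Gam; auto. Qed.
Lemma goodS_GHL ks F : goodS F -> goodS (GHL ks F).
Proof. intros H; induction ks; simpl; auto. apply goodS_GamH; auto. Qed.

Lemma goodS_sum l : (forall X, In X l -> goodS X) -> goodS (sfsum l).
Proof.
  induction l; simpl; intros H; [apply goodS_zero|].
  apply goodS_add; auto.
Qed.

Lemma GamH_sum k l : (forall X, In X l -> goodS X) ->
  GamH k (sfsum l) = sfsum (map (GamH k) l).
Proof.
  induction l; simpl; intros H; [apply GamH_zero|].
  rewrite GamH_add; auto. rewrite IHl; auto. apply goodS_sum; auto.
Qed.

Ltac dsp := repeat match goal with |- context [?F ?a ?b ?c] =>
  lazymatch type of F with sf => is_var F; destruct (F a b c) as [[? ?] [? ?]] end end.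
Ltac dsp2 := cbv [sfadd]; repeat match goal with |- context [sfsum ?l ?a ?b ?c] =>
  destruct (sfsum l a b c) as [[? ?] [? ?]] end.

Lemma sfsum_app l1 l2 : sfsum (l1 ++ l2) = sfadd (sfsum l1) (sfsum l2).
Proof.
  induction l1; simpl.
  - fext. dsp2. spin.
  - rewrite IHl1. fext. dsp2. dsp. spin.
Qed.

Lemma sfsum_map_add {A} (X Y : A -> sf) l :
  sfsum (map (fun p => sfadd (X p) (Y p)) l) = sfadd (sfsum (map X l)) (sfsum (map Y l)).
Proof.
  induction l; simpl.
  - fext. spin.
  - rewrite IHl. fext. dsp2. cbv [sfadd]. repeat match goal with |- context [?F ?p ?a ?b ?c] =>
  lazymatch type of (F p) with sf => destruct (F p a b c) as [[? ?] [? ?]] end end. spin.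
Qed.

Lemma expand ks : forall f F, good f -> goodS F ->
  GHL ks (mulRS f F) =
  sfsum (map (fun p => mulRS (GL (fst p) f) (GHL (snd p) F)) (splits ks)).
Proof.
  induction ks as [|k ks IH]; intros f F Hf HF.
  - simpl. fext. spin.
  - simpl GHL. rewrite IH by auto.
    rewrite GamH_sum.
    2:{ intros X HX. apply in_map_iff in HX. destruct HX as [p [<- _]].
        apply goodS_mul; [apply good_GL|apply goodS_GHL]; auto. }
    rewrite map_map.
    rewrite (map_ext (fun x => GamH k (mulRS (GL (fst x) f) (GHL (snd x) F)))
      (fun x => sfadd (mulRS (Gam k (GL (fst x) f)) (GHL (snd x) F))
                      (mulRS (GL (fst x) f) (GamH k (GHL (snd x) F))))).
    2:{ intros p. apply GamH_mul; [apply good_GL|apply goodS_GHL]; auto. }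
    rewrite sfsum_map_add. cbn [splits]. rewrite map_app, sfsum_app, !map_map.
    reflexivity.
Qed.

Lemma spnorm_eq u : spnorm u =
  sqrt (fst (fst u) * fst (fst u) + snd (fst u) * snd (fst u)
      + fst (snd u) * fst (snd u) + snd (snd u) * snd (snd u)).
Proof.
  unfold spnorm, Cmod. rewrite !pow2_sqrt by nra. f_equal. ring.
Qed.

Lemma sqrt_tri (a b c d a' b' c' d' : R) :
  sqrt ((a+a')*(a+a') + (b+b')*(b+b') + (c+c')*(c+c') + (d+d')*(d+d'))
  <= sqrt (a*a+b*b+c*c+d*d) + sqrt (a'*a'+b'*b'+c'*c'+d'*d').
Proof.
  set (U := a*a+b*b+c*c+d*d). set (V := a'*a'+b'*b'+c'*c'+d'*d').
  assert (HU : 0 <= U) by (unfold U; nra). assert (HV : 0 <= V) by (unfold V; nra).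
  assert (HS : 0 <= sqrt U + sqrt V) by (pose proof (sqrt_pos U); pose proof (sqrt_pos V); lra).
  rewrite <- (sqrt_pow2 (sqrt U + sqrt V)) by auto.
  apply sqrt_le_1_alt.
  assert (E : (sqrt U + sqrt V) ^ 2 = U + V + 2 * sqrt (U * V)).
  { rewrite sqrt_mult_alt by auto. 
    replace ((sqrt U + sqrt V) ^ 2) with (sqrt U ^ 2 + sqrt V ^ 2 + 2 * (sqrt U * sqrt V)) by ring.
    rewrite !pow2_sqrt by auto. ring. }
  rewrite E.
  set (W := a*a'+b*b'+c*c'+d*d').
  assert (HW : W <= sqrt (U * V)).
  { destruct (Rle_or_lt W 0) as [h|h].
    - pose proof (sqrt_pos (U*V)); lra.
    - rewrite <- (sqrt_pow2 W) by lra. apply sqrt_le_1_alt.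
      unfold W, U, V.
      assert (Hl : (a*a+b*b+c*c+d*d)*(a'*a'+b'*b'+c'*c'+d'*d') - (a*a'+b*b'+c*c'+d*d')^2
        = (a*b'-b*a')^2 + (a*c'-c*a')^2 + (a*d'-d*a')^2 + (b*c'-c*b')^2
          + (b*d'-d*b')^2 + (c*d'-d*c')^2) by ring.
      assert (0 <= (a*b'-b*a')^2 + (a*c'-c*a')^2 + (a*d'-d*a')^2 + (b*c'-c*b')^2
          + (b*d'-d*b')^2 + (c*d'-d*c')^2).
      { repeat apply Rplus_le_le_0_compat; apply pow2_ge_0. }
      lra. }
  replace ((a+a')*(a+a') + (b+b')*(b+b') + (c+c')*(c+c') + (d+d')*(d+d'))
    with (U + V + 2 * W) by (unfold U, V, W; ring).
  lra.
Qed.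

Lemma spnorm_add u v : spnorm (spadd u v) <= spnorm u + spnorm v.
Proof.
  rewrite !spnorm_eq. destruct u as [[a b] [c d]], v as [[a' b'] [c' d']].
  cbv [spadd Cplus fst snd]. apply sqrt_tri.
Qed.

Lemma spnorm_scale a u : spnorm (spscale (RtoC a) u) = Rabs a * spnorm u.
Proof.
  rewrite !spnorm_eq. destruct u as [[p q] [r s]].
  cbv [spscale RtoC Cmult fst snd].
  rewrite <- sqrt_Rsqr_abs, <- sqrt_mult_alt by (unfold Rsqr; nra).
  f_equal. unfold Rsqr. ring.
Qed.

Lemma spnorm_zero : spnorm szero = 0.
Proof. rewrite spnorm_eq. cbv [szero fst snd]. replace (0*0+0*0+0*0+0*0) with 0 by ring. apply sqrt_0. Qed.

Lemma minusP_add x1 x2 u v : minusP x1 x2 (spadd u v) = spadd (minusP x1 x2 u) (minusP x1 x2 v).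
Proof.
  unfold minusP. set (r := sqrt (x1 ^ 2 + x2 ^ 2)).
  destruct u as [[a b] [c d]], v as [[a' b'] [c' d']]. spin.
Qed.

Lemma minusP_scale x1 x2 a u : minusP x1 x2 (spscale (RtoC a) u) = spscale (RtoC a) (minusP x1 x2 u).
Proof.
  unfold minusP. set (r := sqrt (x1 ^ 2 + x2 ^ 2)).
  destruct u as [[p q] [c d]]. spin.
Qed.

Lemma minusP_zero x1 x2 : minusP x1 x2 szero = szero.
Proof. unfold minusP. set (r := sqrt (x1 ^ 2 + x2 ^ 2)). spin. Qed.

Lemma norm_sum x1 x2 t l :
  spnorm (minusP x1 x2 (sfsum l t x1 x2)) <=
  sumR (map (fun X => spnorm (minusP x1 x2 (X t x1 x2))) l).
Proof.
  induction l as [|X l IH]; simpl.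
  - unfold sfzero. rewrite minusP_zero, spnorm_zero. lra.
  - unfold sfadd at 1. rewrite minusP_add.
    eapply Rle_trans; [apply spnorm_add|]. lra.
Qed.

Lemma sumR_le_const l S : (forall x, In x l -> x <= S) -> sumR l <= INR (length l) * S.
Proof.
  induction l as [|a l IH]; unfold sumR in *; cbn [fold_right length]; intros H; [simpl; lra|].
  rewrite S_INR. assert (a <= S) by (apply H; left; auto).
  assert (fold_right Rplus 0 l <= INR (length l) * S) by (apply IH; intros; apply H; right; auto). lra.
Qed.

Lemma sumR_nonneg l : (forall y, In y l -> 0 <= y) -> 0 <= sumR l.
Proof. induction l; simpl; intros H; [lra|]. assert (0 <= a) by auto. assert (0 <= sumR l) by auto. lra. Qed.

Lemma in_le_sumR l x : (forall y, In y l -> 0 <= y) -> In x l -> x <= sumR l.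
Proof.
  induction l as [|a l IH]; simpl; intros H Hx; [contradiction|].
  destruct Hx as [<-|Hx].
  - assert (0 <= sumR l) by (apply sumR_nonneg; auto). lra.
  - assert (0 <= a) by auto. assert (x <= sumR l) by auto. lra.
Qed.

Definition listof (I : mi) : list vf :=
  let '(i1, i2, i3, i4, i5, i6) := I in
  repeat Vt i1 ++ repeat V1 i2 ++ repeat V2 i3 ++ repeat VOm i4 ++ repeat VL1 i5 ++ repeat VL2 i6.

Lemma GL_app l1 l2 f : GL (l1 ++ l2) f = GL l1 (GL l2 f).
Proof. induction l1; simpl; congruence. Qed.
Lemma GHL_app l1 l2 F : GHL (l1 ++ l2) F = GHL l1 (GHL l2 F).
Proof. induction l1; simpl; congruence. Qed.
Lemma GL_iter k n f : Nat.iter n (Gam k) f = GL (repeat k n) f.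
Proof. induction n; simpl; congruence. Qed.
Lemma GHL_iter k n F : Nat.iter n (GamH k) F = GHL (repeat k n) F.
Proof. induction n; simpl; congruence. Qed.

Lemma GammaI_GL I f : GammaI I f = GL (listof I) f.
Proof.
  destruct I as [[[[[i1 i2] i3] i4] i5] i6]. unfold GammaI, listof.
  rewrite !GL_app, !GL_iter. reflexivity.
Qed.
Lemma GammaHI_GHL I F : GammaHI I F = GHL (listof I) F.
Proof.
  destruct I as [[[[[i1 i2] i3] i4] i5] i6]. unfold GammaHI, listof.
  rewrite !GHL_app, !GHL_iter. reflexivity.
Qed.

Lemma length_splits l : length (splits l) = (2 ^ length l)%nat.
Proof.
  induction l; simpl; auto. rewrite length_app, !length_map, IHl. lia.
Qed.

Lemma length_listof I : length (listof I) = mi_size I.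
Proof.
  destruct I as [[[[[i1 i2] i3] i4] i5] i6]. unfold listof, mi_size.
  rewrite !length_app, !repeat_length. lia.
Qed.

Lemma splits_app l1 l2 p : In p (splits (l1 ++ l2)) ->
  exists p1 p2, In p1 (splits l1) /\ In p2 (splits l2) /\
    p = (fst p1 ++ fst p2, snd p1 ++ snd p2).
Proof.
  revert p; induction l1 as [|k l1 IH]; intros p Hp; simpl in *.
  - exists ([], []), p. destruct p; simpl; auto.
  - apply in_app_or in Hp. destruct Hp as [Hp|Hp]; apply in_map_iff in Hp;
    destruct Hp as [q [<- Hq]]; destruct (IH q Hq) as (p1 & p2 & H1 & H2 & ->).
    + exists (k :: fst p1, snd p1), p2. repeat split; auto.
      apply in_or_app; left. apply in_map_iff. exists p1; auto.
    + exists (fst p1, k :: snd p1), p2. repeat split; auto.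
      apply in_or_app; right. apply in_map_iff. exists p1; auto.
Qed.

Lemma splits_repeat k m p : In p (splits (repeat k m)) ->
  exists i j, (i + j = m)%nat /\ p = (repeat k i, repeat k j).
Proof.
  revert p; induction m as [|m IH]; intros p Hp; simpl in *.
  - destruct Hp as [<-|[]]. exists 0%nat, 0%nat. auto.
  - apply in_app_or in Hp. destruct Hp as [Hp|Hp]; apply in_map_iff in Hp;
    destruct Hp as [q [<- Hq]]; destruct (IH q Hq) as (i & j & Hij & ->); simpl.
    + exists (S i), j. split; [lia|auto].
    + exists i, (S j). split; [lia|auto].
Qed.

Lemma split_listof I p : In p (splits (listof I)) ->
  exists J J', p = (listof J, listof J') /\ (mi_size J + mi_size J' = mi_size I)%nat.
Proof.
  destruct I as [[[[[i1 i2] i3] i4] i5] i6]. unfold listof. intros Hp.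
  apply splits_app in Hp as (q1 & r1 & H1 & Hr1 & ->).
  apply splits_app in Hr1 as (q2 & r2 & H2 & Hr2 & ->).
  apply splits_app in Hr2 as (q3 & r3 & H3 & Hr3 & ->).
  apply splits_app in Hr3 as (q4 & r4 & H4 & Hr4 & ->).
  apply splits_app in Hr4 as (q5 & q6 & H5 & H6 & ->).
  apply splits_repeat in H1 as (a1 & b1 & E1 & ->).
  apply splits_repeat in H2 as (a2 & b2 & E2 & ->).
  apply splits_repeat in H3 as (a3 & b3 & E3 & ->).
  apply splits_repeat in H4 as (a4 & b4 & E4 & ->).
  apply splits_repeat in H5 as (a5 & b5 & E5 & ->).
  apply splits_repeat in H6 as (a6 & b6 & E6 & ->).
  exists (a1, a2, a3, a4, a5, a6), (b1, b2, b3, b4, b5, b6). simpl. split; [reflexivity|lia].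
Qed.

Lemma in_mis J n : (mi_size J <= n)%nat -> In J (mis_upto n).
Proof.
  destruct J as [[[[[a b] c] d] e] f]. unfold mis_upto, mi_size. intros H.
  apply filter_In. split; [|apply Nat.leb_le; exact H].
  assert (S : forall x, (x <= n)%nat -> In x (seq 0 (S n))) by (intros; apply in_seq; lia).
  apply in_flat_map; exists a; split; [apply S; lia|].
  apply in_flat_map; exists b; split; [apply S; lia|].
  apply in_flat_map; exists c; split; [apply S; lia|].
  apply in_flat_map; exists d; split; [apply S; lia|].
  apply in_flat_map; exists e; split; [apply S; lia|].
  apply in_map_iff; exists f; split; [reflexivity|apply S; lia].
Qed.

Lemma in_pairs J J' n : (mi_size J + mi_size J' = n)%nat -> In (J, J') (pairs_upto n).
Proof.
  intros H. unfold pairs_upto. apply filter_In. split.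
  - apply in_prod; apply in_mis; lia.
  - apply Nat.leb_le. simpl. lia.
Qed.

Theorem lemma2p3 :
  forall n : nat, exists K : R, 0 <= K /\
    forall (I : mi), mi_size I = n ->
    forall (f1 : fn) (f2 : sf), smooth f1 -> smoothS f2 ->
    forall t x1 x2 : R, (x1 <> 0 \/ x2 <> 0) ->
      spnorm (minusP x1 x2 (GammaHI I (mulRS f1 f2) t x1 x2))
      <= K * sumR (map (fun p : mi * mi =>
                 Rabs (GammaI (fst p) f1 t x1 x2)
                 * spnorm (minusP x1 x2 (GammaHI (snd p) f2 t x1 x2)))
               (pairs_upto n)).
Proof.
  intros n. exists (INR (2 ^ n)). split; [apply pos_INR|].
  intros I HI f1 f2 Hs1 Hs2 t x1 x2 _.
  assert (Hf := smooth_good f1 Hs1).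
  assert (HF : goodS f2).
  { destruct Hs2 as (a&b&c&d). repeat split; apply smooth_good; auto. }
  set (S := sumR (map (fun p : mi * mi =>
                 Rabs (GammaI (fst p) f1 t x1 x2)
                 * spnorm (minusP x1 x2 (GammaHI (snd p) f2 t x1 x2)))
               (pairs_upto n))).
  rewrite GammaHI_GHL, expand by auto.
  eapply Rle_trans; [apply norm_sum|]. rewrite map_map.
  eapply Rle_trans; [apply sumR_le_const with (S := S)|].
  - intros x Hx. apply in_map_iff in Hx as [p [<- Hp]].
    destruct (split_listof I p Hp) as (J & J' & -> & HJ). cbn [fst snd].
    unfold mulRS. rewrite minusP_scale, spnorm_scale.
    rewrite <- GammaI_GL, <- GammaHI_GHL.
    apply in_le_sumR.
    + intros y Hy. apply in_map_iff in Hy as [q [<- _]].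
      apply Rmult_le_pos; [apply Rabs_pos|unfold spnorm; apply sqrt_pos].
    + apply in_map_iff. exists (J, J'). split; [reflexivity|apply in_pairs; lia].
  - rewrite length_map, length_splits, length_listof, HI. lra.
Qed.
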